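(* Let $k$ and $n$ be integers with $n\geqslant 9$ and $n>k \geqslant e \ln n+e$. Then for every $i\in\{1,2,\ldots,n\}$, the number \[ S(n,i,k)=\sum_{\substack{1 \leqslant i_1<i_2<\cdots<i_k \leqslant n,\\ i_j \neq i \text{ for } j=1,2,\ldots,k}} \frac{1}{i_1 i_2 \cdots i_k} \] is not an integer.
   Context: For integers $n,i,k$ with $1\leqslant k<n$ and $1\leqslant i\leqslant n$, $S(n,i,k)$ denotes the $k$-th elementary symmetric function of the $n-1$ numbers $\{1,1/2,\ldots,1/n\}\setminus\{1/i\}$. Here $e$ is Euler's number and $\ln$ the natural logarithm. *)

(* Defs.v *)
From mathcomp Require Import all_boot all_order all_algebra.
From Stdlib Require Import Reals.
Set Implicit Arguments. Unset Strict Implicit. Unset Printing Implicit Defensive.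
Import Order.TTheory GRing.Theory Num.Theory.
Local Open Scope ring_scope.

(* S n i k : the k-th elementary symmetric function of {1, 1/2, ..., 1/n} \ {1/i},
   computed in rat. Indices j : 'I_n stand for the integer j+1; i is the integer
   1 <= i <= n (the excluded index). *)
Definition S (n i k : nat) : rat :=
  \sum_(A : {set 'I_n} | (#|A| == k)%N && [forall j in A, (j.+1 != i)%N])
     \prod_(j in A) ((j.+1)%:R)^-1.

(* Main.v *)
Require Import Defs.
From mathcomp Require Import all_boot all_order all_algebra.
From Stdlib Require Import Reals Lra.
From mathcomp Require Import zify.
From mathcomp Require Import Rstruct.
Import Order.TTheory GRing.Theory Num.Theory.
Lemma ln_step (m : R) : (1 <= m)%R -> (/ (m + 1) <= ln (m + 1) - ln m)%R.
Proof.
move=> hm.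
have hp : (0 < m + 1)%R by lra.
have hx : (- / (m + 1) <> 0)%R.
  have := Rinv_0_lt_compat _ hp; lra.
have h1 := exp_ineq1 _ hx.
have e : (1 + - / (m + 1) = m * / (m + 1))%R by field; lra.
rewrite e in h1.
have hpos : (0 < m * / (m + 1))%R.
  apply: Rmult_lt_0_compat; [lra| exact: Rinv_0_lt_compat].
have h2 := ln_increasing _ _ hpos h1.
rewrite ln_exp ln_mult ?ln_Rinv in h2; try lra.
  exact: Rinv_0_lt_compat.
Qed.

Local Open Scope ring_scope.

Definition xx (j : nat) : R := ((j.+1)%:R)^-1.
Definition yy (i j : nat) : R := if (j.+1 != i)%nat then xx j else 0.

Lemma xx_ge0 j : 0 <= xx j.
Proof. by rewrite /xx invr_ge0 ler0n. Qed.
Lemma yy_ge0 i j : 0 <= yy i j.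
Proof. rewrite /yy; case: ifP => _ //; exact: xx_ge0. Qed.

Lemma ratrS n i k : ratr (S n i k) =
  \sum_(A : {set 'I_n} | (#|A| == k)%nat && [forall j in A, (j.+1 != i)%nat])
     \prod_(j in A) xx j.
Proof.
rewrite /S rmorph_sum; apply: eq_bigr => A _; rewrite rmorph_prod.
by apply: eq_bigr => j _; rewrite fmorphV /= ratr_nat.
Qed.

Lemma expand n (f : 'I_n -> R) :
  \prod_(j < n) (f j + 1) = \sum_(A : {set 'I_n}) \prod_(j in A) f j.
Proof.
rewrite (bigA_distr 1 +%R f (fun _ => 1)).
apply: eq_bigr => A _; by rewrite [RHS]big_mkcond.
Qed.

Lemma exp_sum n (f : 'I_n -> R) :
  exp (\sum_(j < n) f j) = \prod_(j < n) exp (f j).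
Proof.
elim: n f => [|n IH] f; first by rewrite !big_ord0 expR0.
by rewrite !big_ord_recr /= -expRD IH.
Qed.

Lemma upper n i k (t : R) : 0 <= t ->
  t ^+ k * ratr (S n i k) <= exp (t * \sum_(j < n) yy i j).
Proof.
move=> t0.
rewrite ratrS mulr_sumr.
apply: (@le_trans _ _ (\sum_(A : {set 'I_n}) \prod_(j in A) (t * yy i j))).
  rewrite [X in X <= _]big_mkcond /=; apply: ler_sum => A _.
  case: ifP => [/andP[/eqP hk /forallP hA]|_].
    rewrite big_split /= prodr_const hk.
    have -> : \prod_(j in A) yy i j = \prod_(j in A) xx j.
      by apply: eq_bigr => j jA; rewrite /yy; have := hA j; rewrite jA /= => ->.
    exact: lexx.
  by apply: prodr_ge0 => j _; apply: mulr_ge0 => //; apply: yy_ge0.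
rewrite -expand.
rewrite RmultE.
have -> : t * \sum_(j < n) yy i j = \sum_(j < n) (t * yy i j) by rewrite big_distrr.
rewrite exp_sum.
apply: ler_prod => j _; apply/andP; split.
  by rewrite addr_ge0 // mulr_ge0 // yy_ge0.
apply/RleP; rewrite addrC; exact: exp_ineq1_le.
Qed.

Lemma harm (n : nat) : (0 < n)%nat ->
  \sum_(j < n) ((j.+1)%:R : R)^-1 <= 1 + ln (n%:R).
Proof.
elim: n => [//|n IH] _.
case: n IH => [|n] IH.
  by rewrite big_ord1 invr1 -INRE ln_1 addr0.
rewrite big_ord_recr /=.
have h2 := IH isT.
have hm : (1 <= INR n.+1)%R by rewrite S_INR; have := pos_INR n; lra.
have h3 := ln_step _ hm.
apply/RleP.
move/RleP: h2.
rewrite -!INRE -!RinvE -!RplusE.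
rewrite (S_INR n.+1).
move: (\sum_(_ < _) _) => s.
set a := INR n.+1 in h3 *.
rewrite -?R1E.
lra.
Qed.

Lemma lower n i k : (k < n)%nat -> (1 <= i <= n)%nat -> 0 < (ratr (S n i k) : R).
Proof.
rewrite ratrS; case: n => [//|n] hk hi.
pose g (m : 'I_k) : 'I_n.+1 := inord (if (m.+1 < i)%nat then (m : nat) else m.+1).
have gv (m : 'I_k) : nat_of_ord (g m) = (if (m.+1 < i)%nat then (m : nat) else m.+1).
  rewrite /g inordK //; move: (ltn_ord m); case: ifP; lia.
have ginj : injective g.
  move=> a b /(congr1 (@nat_of_ord _)); rewrite !gv => e; apply/val_inj => /=.
  move: e; case: ifP; case: ifP; lia.
pose A := [set g m | m : 'I_k].
have hA : (#|A| == k)%nat && [forall j in A, (j.+1 != i)%nat].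
  apply/andP; split; first by rewrite card_imset // card_ord.
  apply/forallP => j; apply/implyP => /imsetP [m _ ->].
  rewrite gv; case: ifP; lia.
rewrite (bigD1 A) //=.
apply: (@lt_le_trans _ _ (\prod_(j in A) xx j)).
  by apply: prodr_gt0 => j _; rewrite /xx invr_gt0 ltr0n.
by rewrite lerDl sumr_ge0 // => B _; apply: prodr_ge0 => j _; exact: xx_ge0.
Qed.

Lemma Ybound n i : (1 <= i <= n)%nat ->
  \sum_(j < n) yy i j < 1 + ln (n%:R).
Proof.
case: n => [|n] hi; first by move: hi; lia.
apply: (@lt_le_trans _ _ (\sum_(j < n.+1) ((j.+1)%:R : R)^-1)); last exact: harm.
pose i0 : 'I_n.+1 := inord i.-1.
have i0v : nat_of_ord i0 = i.-1 by rewrite inordK //; lia.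
rewrite (bigD1 i0) // [X in _ < X](bigD1 i0) //=.
have -> : yy i i0 = 0 by rewrite /yy i0v; case: ifP => //; lia.
rewrite add0r; apply: ltr_pwDl; first by rewrite invr_gt0 ltr0n.
apply: ler_sum => j hj; rewrite /yy.
have -> : (j.+1 != i)%nat.
  move: hj; rewrite -(inj_eq val_inj) /= i0v; lia.
exact: lexx.
Qed.

Lemma s_lt1 n i k : (9 <= n)%nat -> (1 <= i <= n)%nat ->
  exp 1 * ln (n%:R) + exp 1 <= k%:R -> (ratr (S n i k) : R) < 1.
Proof.
move=> h9 hi hr.
have hY := @Ybound n i hi.
set s := (ratr (S n i k) : R).
set Y := \sum_(j < n) yy i j in hY.
set c := 1 + ln (n%:R) in hY.
have hln : 0 < ln (n%:R).
  have h9' : (INR 9 <= INR n)%R by apply: le_INR; lia.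
  rewrite INR_IZR_INZ /= in h9'.
  have h : (1 < INR n)%R by lra.
  have := ln_increasing 1 (INR n) Rlt_0_1 h.
  rewrite ln_1 INRE => h'; exact/RltP.
have hc : 0 < c by rewrite /c addr_gt0.
have he : 0 < exp 1 by apply/RltP; exact: exp_pos.
have hkc : exp 1 * c <= k%:R by rewrite /c mulrDr mulr1 addrC.
set t := k%:R / c.
have ht : exp 1 <= t by rewrite /t ler_pdivlMr.
have ht0 : 0 < t by apply: lt_le_trans ht.
have hup := @upper n i k t (ltW ht0).
have h1 : exp (t * Y) < exp (t * c).
  apply/RltP; apply: exp_increasing; apply/RltP; rewrite ltr_pM2l //.
have h2 : t * c = k%:R by rewrite /t divfK // gt_eqF.
rewrite !RmultE h2 -expRX in h1.
have h3 : exp 1 ^+ k <= t ^+ k.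
  apply: lerXn2r => //; rewrite ?nnegrE ?ltW //.
have h4 : t ^+ k * s < t ^+ k * 1.
  rewrite mulr1; apply: le_lt_trans hup _; apply: lt_le_trans h1 h3.
by rewrite ltr_pM2l ?exprn_gt0 in h4.
Qed.

Local Close Scope ring_scope.

Theorem lemma2p3 (n k i : nat) :
  (9 <= n)%N -> (k < n)%N ->
  (exp 1 * ln (INR n) + exp 1 <= INR k)%R ->
  (1 <= i <= n)%N ->
  ~ (S n i k \is a Num.int).
Proof.
move=> h9 hk hr hi /intrP [m hm].
have hlo := @lower n i k hk hi.
move/RleP: hr; rewrite !INRE RplusE RmultE => hr.
have hup := @s_lt1 n i k h9 hi hr.
rewrite hm ratr_int in hlo hup.
rewrite ltr0z in hlo; rewrite ltrz1 in hup.
lia.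
Qed.
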